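(* Let $G=(V,E)$ be a finite simple graph with nonempty vertex set and burning number $b(G)$. Consider the following procedure (Algorithm 1), which receives $G$ and $b(G)$ as input. Choose $s_1\in V$ arbitrarily. For $i=2,\dots,b(G)$, let $s_i$ be any vertex $u\in V$ maximizing $d(u,\{s_1,\dots,s_{i-1}\})$ (ties broken arbitrarily). For $i=b(G)+1,\dots,3b(G)-2$, let $s_i$ be an arbitrary vertex of $V$. Then, for every choice made by this procedure, the sequence $(s_1,\dots,s_k)$ with $k=3b(G)-2$ is a burning sequence of $G$, i.e. $\bigcup_{i=1}^{k} N_{k-i}[s_i]=V$. Consequently its length $3b(G)-2$ is at most $3-2/b(G)$ times the burning number, i.e. Algorithm 1 is a $(3-2/b(G))$-approximation algorithm for the graph burning problem.
   Context: For vertices $u,v$ of $G$, $d(u,v)$ is the number of edges on a shortest $u$–$v$ path ($+\infty$ if none exists), and for $S\subseteq V$, $d(u,S)=\min_{w\in S}d(u,w)$. For $v\in V$ and an integer $r\ge 0$, $N_r[v]=\{u\in V: d(u,v)\le r\}$ is the closed $r$-th neighborhood of $v$ (so $N_0[v]=\{v\}$). A burning sequence of length $k$ is a sequence $(s_1,\dots,s_k)$ of vertices of $G$ (repetitions allowed) such that $\bigcup_{i=1}^{k}N_{k-i}[s_i]=V$. The burning number $b(G)$ is the minimum length of a burning sequence of $G$. *)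

(* Defs.v *)
(* A finite simple graph is a symmetric irreflexive e : rel T
   on a nonempty finType T. *)
From mathcomp Require Import all_boot all_order all_algebra.
Set Implicit Arguments. Unset Strict Implicit. Unset Printing Implicit Defensive.

Section Burning.
Variables (T : finType) (e : rel T).

Definition dist_le (u v : T) (r : nat) : Prop :=
  exists p : seq T, [/\ path e u p, last u p = v & size p <= r].

Definition nbhd (v : T) (r : nat) : T -> Prop := fun u => dist_le u v r.

Definition distS_le (u : T) (S : seq T) (r : nat) : Prop :=
  exists2 w, w \in S & dist_le u w r.

(* d(u1,S) <= d(u2,S) as extended naturals (+oo when no path exists):
   every bound r on d(u2,S) is also a bound on d(u1,S). *)
Definition distS_leq (u1 : T) (S : seq T) (u2 : T) : Prop :=
  forall r, distS_le u2 S r -> distS_le u1 S r.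

(* (s_1,...,s_k) is a burning sequence: \bigcup_{i=1}^k N_{k-i}[s_i] = V.
   With 0-based index i, s_{i+1} = nth _ s i and radius k - (i+1). *)
Definition is_burning_seq (s : seq T) : Prop :=
  forall x : T, exists2 i, i < size s & nbhd (nth x s i) (size s - i.+1) x.

Definition burning_number (n : nat) : Prop :=
  (exists2 s : seq T, size s = n & is_burning_seq s) /\
  (forall s : seq T, is_burning_seq s -> n <= size s).

End Burning.

(* Main.v *)
Require Import Defs.
From mathcomp Require Import all_boot all_order all_algebra.
From mathcomp Require Import zify.
Import GRing.Theory Num.Theory.
Local Open Scope ring_scope.

Section Helpers.
Variables (T : finType) (e : rel T).

Lemma dl_mono u v r r' : dist_le e u v r -> (r <= r')%N -> dist_le e u v r'.
Proof. move=> [p [H1 H2 H3]] Hr; exists p; split => //; exact: leq_trans H3 Hr. Qed.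

Lemma dl_trans u v w r1 r2 : dist_le e u v r1 -> dist_le e v w r2 ->
  dist_le e u w (r1 + r2).
Proof.
move=> [p [P1 L1 S1]] [q [P2 L2 S2]]; exists (p ++ q); split.
- by rewrite cat_path P1 L1 P2.
- by rewrite last_cat L1.
- by rewrite size_cat leq_add.
Qed.

Lemma dl_sym u v r : symmetric e -> dist_le e u v r -> dist_le e v u r.
Proof.
move=> esym [p [P L S]]; elim: p u r P L S => [|x p IH] u r /= P L S.
  by exists [::]; split => //; rewrite -L.
case/andP: P => eux P.
have Sr : (size p <= r.-1)%N by case: r S.
have [q [Q1 Q2 Q3]] := IH x r.-1 P L Sr.
exists (rcons q u); split.
- by rewrite rcons_path Q1 Q2 esym.
- by rewrite last_rcons.
- rewrite size_rcons; case: r S Sr Q3 => //.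
Qed.

Lemma choose_fun (b n : nat) (P : nat -> nat -> Prop) :
  (forall i, (i < n)%N -> exists2 j, (j < b)%N & P i j) ->
  exists f : nat -> nat, forall i, (i < n)%N -> (f i < b)%N /\ P i (f i).
Proof.
elim: n => [|n IH] H; first by exists id.
have [f Hf] : exists f : nat -> nat, forall i, (i < n)%N -> (f i < b)%N /\ P i (f i).
  by apply: IH => i Hi; apply: H; apply: ltnW.
have [j Hj Pj] := H n (ltnSn n).
exists (fun i => if i == n then j else f i) => i Hi.
case: eqP => [->|ne]; first by [].
apply: Hf; rewrite ltnS leq_eqVlt in Hi; case/orP: Hi => // /eqP; done.
Qed.

End Helpers.
Arguments dl_mono {T e u v r r'}.
Arguments dl_trans {T e u v w r1 r2}.
Arguments dl_sym {T e u v r}.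
Arguments choose_fun {b n}.

Theorem theorem1 (T : finType) (e : rel T)
  (e_sym : symmetric e) (e_irr : irreflexive e) (T_nonempty : (0 < #|T|)%N)
  (b : nat) (Hb : burning_number e b)
  (s : seq T) (Hsize : size s = (3 * b - 2)%N)
  (Hmax : forall i : nat, (0 < i < b)%N ->
            forall w : T, distS_leq e w (take i s) (nth w s i)) :
  is_burning_seq e s /\
  ((3 * b - 2)%N%:R <= (3 - 2 / b%:R) * b%:R :> rat).
Proof.
case/card_gt0P: T_nonempty => x0 _.
case: Hb => [[t St Ht] _].
have bpos : (0 < b)%N.
  have [j Hj _] := Ht x0; by rewrite -St (leq_ltn_trans _ Hj).
split; last first.
  rewrite natrB; last by lia.
  rewrite natrM mulrBl -mulrA mulVf ?mulr1 // pnatr_eq0; lia.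
pose cl j u := dist_le e u (nth x0 t j) (b - j.+1).
have clx : forall u, exists2 j, (j < b)%N & cl j u.
  move=> u; have [j Hj Hd] := Ht u; exists j; first by rewrite -St.
  by move: Hd; rewrite /nbhd /cl (set_nth_default x0 u Hj) St.
have clpair : forall j u v, (j < b)%N -> cl j u -> cl j v -> dist_le e u v (2 * b - 2)%N.
  move=> j u v Hj Hu Hv; apply: (dl_mono (dl_trans Hu (dl_sym e_sym Hv))); rewrite /=; lia.
have fin : forall u i, (i < b)%N -> dist_le e u (nth x0 s i) (2 * b - 2)%N ->
    exists2 i, (i < size s)%N & nbhd e (nth u s i) (size s - i.+1) u.
  move=> u i Hi Hd; have Hi' : (i < size s)%N by rewrite Hsize; lia.
  exists i => //; rewrite /nbhd (set_nth_default x0 _ Hi'); apply: (dl_mono Hd).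
  rewrite Hsize; lia.
have [c Hc] := choose_fun (n:=b) (fun i j => cl j (nth x0 s i)) (fun i _ => clx (nth x0 s i)).
pose l := map c (iota 0 b).
have Hsl : size l = b by rewrite size_map size_iota.
case: (boolP (uniq l)) => [Ul | /(uniqPn 0%N) [p [q [Hpq Hq Hn]]]].
  have Hsub : {subset l <= iota 0 b}.
    move=> x /mapP [i]; rewrite mem_iota => /andP [_ Hi] ->.
    by rewrite mem_iota add0n (Hc i Hi).1.
  have [_ Heq] := uniq_min_size Ul Hsub ltac:(by rewrite size_iota Hsl).
  move=> u; have [j Hj Hu] := clx u.
  have : j \in l by rewrite Heq mem_iota add0n Hj.
  case/mapP => i; rewrite mem_iota add0n => /andP [_ Hi] Ej.
  apply: (fin u i Hi); apply: (clpair j) => //; rewrite Ej; exact: (Hc i Hi).2.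
rewrite Hsl in Hq.
rewrite !(nth_map 0%N) ?size_iota // in Hn; last by lia.
rewrite !nth_iota ?add0n in Hn; try lia.
have Hp : (p < b)%N by lia.
have Hd : dist_le e (nth x0 s q) (nth x0 s p) (2 * b - 2)%N.
  apply: (clpair (c q)); first exact: (Hc q Hq).1.
  - exact: (Hc q Hq).2.
  - rewrite -Hn; exact: (Hc p Hp).2.
have Hqs : (q < size s)%N by rewrite Hsize; lia.
move=> u.
have Hm := Hmax q ltac:(apply/andP; split; lia) u.
have Hps : (p < size (take q s))%N by rewrite size_take; case: ifP; lia.
have : distS_le e (nth u s q) (take q s) (2 * b - 2)%N.
  exists (nth x0 s p); last by rewrite (set_nth_default x0 _ Hqs).
  by rewrite -(nth_take x0 Hpq) mem_nth.
case/Hm => w Hw Hdw.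
have Hiw := Hw; rewrite -index_mem in Hiw.
have Hi : (index w (take q s) < q)%N by move: Hiw; rewrite size_take; case: ifP; lia.
apply: (fin u (index w (take q s))); first lia.
by rewrite -(nth_take x0 Hi) nth_index.
Qed.
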